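(* Let $P$ be a distribution on $\mathcal X\times\mathcal Y$ with every $\mathbf x\in\mathcal X\subseteq\mathbb R^d$ satisfying $\|\mathbf x\|\le1$ and $\mathcal Y=\{-1,+1\}$ or $[-1,1]$; let $(\mathbf x_i,y_i)_{i=1}^n$ be i.i.d. from $P$. Let $R>0$, $\mathscr W=\{\mathbf w:\|\mathbf w\|\le R\}$, $\ell:\mathbb R\to\mathbb R_+$ convex, $\alpha$-exp-concave on $|z|\le R$, $|\ell'|\le G$, $\mathcal L(\mathbf w)=\mathrm E[\ell(y\mathbf w^\top\mathbf x)]$, $\mathbf w_*\in\arg\min_{\mathscr W}\mathcal L$, $\mathbf H=\mathrm E[\mathbf x\mathbf x^\top]$, $\beta=\frac12\min(\alpha,1/(4GR))$, and suppose Assumption (II) holds with constant $\theta>0$. Let $\mathbf w_1,\dots,\mathbf w_n$ be the iterates of the algorithm in the context and $A=\sum_{i=1}^n\|\mathbf w_i-\mathbf w_*\|_{\mathbf H}^2$. If $A\le4R^2/n$, then \[ \sum_{i=1}^n\left(\mathcal L(\mathbf w_i)-\mathcal L(\mathbf w_* )\right)+\frac{\theta\beta}2\sum_{i=1}^n\|\mathbf w_i-\mathbf w_*\|_{\mathbf H}^2\le2RG. \]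
   Context: $\|\mathbf w\|_{\mathbf H}^2=\mathbf w^\top\mathbf H\mathbf w$. Assumption (II): $\mathrm E[(\ell'(y\mathbf w^\top\mathbf x))^2\mathbf x\mathbf x^\top]\succeq\theta\,\mathrm E[\mathbf x\mathbf x^\top]$ for all $\mathbf w\in\mathscr W$. Algorithm with inputs $\eta_1>0$, $a>0$: $\mathbf w_1=\mathbf 0$, $\mathbf M_0=a\mathbf I$; for $i=1,\dots,n$: $\mathbf M_i=\mathbf M_{i-1}+\mathbf x_i\mathbf x_i^\top$, $\mathbf Z_i=\mathbf M_i/i$, $\mathbf v_i=\ell'(y_i\mathbf w_i^\top\mathbf x_i)\mathbf x_i$, $\eta_i=\eta_1/i$, $\mathbf w_{i+1}=\arg\min_{\mathbf w\in\mathscr W}\eta_i\langle\mathbf w,\mathbf v_i\rangle+\frac12(\mathbf w-\mathbf w_i)^\top\mathbf Z_i(\mathbf w-\mathbf w_i)$. *)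

(* Defs.v *)
From HB Require Import structures.
From mathcomp Require Import all_boot all_order all_algebra.
From mathcomp Require Import all_classical all_reals all_analysis.
Set Implicit Arguments.
Unset Strict Implicit.
Unset Printing Implicit Defensive.
Import Order.TTheory GRing.Theory Num.Theory.
Import numFieldNormedType.Exports.
Local Open Scope ring_scope.

Section Defs.
Variable R : realType.

Definition dotv (d : nat) (u v : 'cV[R]_d) : R := \sum_(k < d) u k 0 * v k 0.
Definition enorm (d : nat) (u : 'cV[R]_d) : R := Num.sqrt (dotv u u).

(* quadratic form v^T M v, so that ||v||_H^2 = qform H v *)
Definition qform (d : nat) (M : 'M[R]_d) (v : 'cV[R]_d) : R := (v^T *m M *m v) 0 0.

Definition convex_on_R (f : R -> R) : Prop :=
  forall a b t : R, 0 <= t <= 1 ->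
    f (t * a + (1 - t) * b) <= t * f a + (1 - t) * f b.

Definition exp_concave_on (alpha r : R) (f : R -> R) : Prop :=
  forall a b t : R, `|a| <= r -> `|b| <= r -> 0 <= t <= 1 ->
    t * expR (- alpha * f a) + (1 - t) * expR (- alpha * f b)
      <= expR (- alpha * f (t * a + (1 - t) * b)).

Context (dT : measure_display) (T : measurableType dT) (P : probability T R).

Definition risk (d : nat) (l : R -> R) (x : T -> 'cV[R]_d) (y : T -> R)
    (w : 'cV[R]_d) : R :=
  \int[P]_(t in setT) l (y t * dotv w (x t)).

Definition second_moment (d : nat) (x : T -> 'cV[R]_d) : 'M[R]_d :=
  \matrix_(i, j) \int[P]_(t in setT) (x t i 0 * x t j 0).

Definition weighted_moment (d : nat) (l : R -> R) (x : T -> 'cV[R]_d)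
    (y : T -> R) (w : 'cV[R]_d) : 'M[R]_d :=
  \matrix_(i, j) \int[P]_(t in setT)
     ((derive1 l (y t * dotv w (x t))) ^+ 2 * (x t i 0 * x t j 0)).

End Defs.

(* Algorithm quantities, for sample s : nat -> T (s i = (x_i, y_i), i >= 1) *)
Section Alg.
Variables (R : realType) (dT : measure_display) (T : measurableType dT).

Definition Mmat (d : nat) (x : T -> 'cV[R]_d) (s : nat -> T) (a : R) (i : nat)
  : 'M[R]_d := a%:M + \sum_(1 <= k < i.+1) (x (s k) *m (x (s k))^T).

Definition Zmat (d : nat) (x : T -> 'cV[R]_d) (s : nat -> T) (a : R) (i : nat)
  : 'M[R]_d := (i%:R)^-1 *: Mmat x s a i.

Definition step_obj (d : nat) (l : R -> R) (x : T -> 'cV[R]_d) (y : T -> R)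
  (s : nat -> T) (eta1 a : R) (wi : 'cV[R]_d) (i : nat) (w : 'cV[R]_d) : R :=
  let vi := (derive1 l (y (s i) * dotv wi (x (s i)))) *: x (s i) in
  (eta1 / i%:R) * dotv w vi
  + 2^-1 * qform (Zmat x s a i) (w - wi).

End Alg.

(* Main.v *)
Require Import Defs.
From HB Require Import structures.
From mathcomp Require Import all_boot all_order all_algebra.
From mathcomp Require Import all_classical all_reals all_analysis.
From mathcomp Require Import ring lra.
Import Order.TTheory GRing.Theory Num.Theory.
Import numFieldNormedType.Exports.
Local Open Scope ring_scope.
Local Open Scope classical_set_scope.

Set Implicit Arguments.
Unset Strict Implicit.
Section A.
Variable R : realType.

Lemma quot_cvg (g : R -> R) z : derivable g z 1 ->
  (fun h => h^-1 * (g (h + z) - g z)) @ (0:R)^' --> derive1 g z.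
Proof.
move=> dg.
have -> : derive1 g z = lim ((fun h => h^-1 * (g (h + z) - g z)) @ 0^') by [].
have : cvg ((fun h => h^-1 *: ((g \o shift z) (h *: 1) - g z)) @ 0^') := dg.
have E : (fun h => h^-1 *: ((g \o shift z) (h *: (1:R)) - g z)) = (fun h => h^-1 * (g (h + z) - g z)).
  by apply: funext => h /=; rewrite /GRing.scale /= mulr1.
by rewrite E.
Qed.

Lemma right_of (f : R -> R) (l : R) : f @ (0:R)^' --> l -> f @ at_right (0:R) --> l.
Proof.
move=> cvfx A /cvfx /nbhs_ballP [_ /posnumP[e] xe_A].
by exists e%:num => //= y xe_y /gt_eqF/negbT/xe_A; exact.
Qed.

Lemma left_of (f : R -> R) (l : R) : f @ (0:R)^' --> l -> f @ at_left (0:R) --> l.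
Proof.
move=> cvfx A /cvfx /nbhs_ballP [_ /posnumP[e] xe_A].
by exists e%:num => //= y xe_y /lt_eqF/negbT/xe_A; exact.
Qed.


Lemma tangent (g : R -> R) (r z z' : R) :
  (forall a b t, `|a| <= r -> `|b| <= r -> 0 <= t <= 1 ->
     t * g a + (1 - t) * g b <= g (t * a + (1 - t) * b)) ->
  `|z| <= r -> `|z'| <= r -> derivable g z 1 ->
  g z' - g z <= derive1 g z * (z' - z).
Proof.
move=> cc hz hz' dg.
have Q := quot_cvg dg.
have [lt|gt|->] := ltgtP z z'; last by rewrite !subrr mulr0.
- set d := z' - z; have d0 : 0 < d by rewrite subr_gt0.
  have QR := right_of Q.
  have -> : derive1 g z = lim ((fun h => h^-1 * (g (h + z) - g z)) @ at_right (0:R)).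
    by apply/esym/cvg_lim.
  rewrite -ler_pdivrMr //.
  apply: limr_ge; first by apply/cvg_ex; eexists; exact QR.
  near=> h.
  have h0 : 0 < h by near: h; exact: nbhs_right_gt.
  have hd : h < d by near: h; exact: nbhs_right_lt.
  have t01 : 0 <= h / d <= 1.
    by apply/andP; split; [rewrite divr_ge0 // ltW | rewrite ler_pdivrMr // mul1r ltW].
  have := cc z' z (h / d) hz' hz t01.
  have -> : h / d * z' + (1 - h / d) * z = h + z.
    by rewrite /d; field; rewrite subr_eq0 gt_eqF.
  move=> H.
  have -> : (g z' - g z) / d = h^-1 * (h / d * (g z' - g z)).
    by field; rewrite !gt_eqF.
  apply: ler_wpM2l; first by rewrite invr_ge0 ltW.
  lra.
- set d := z - z'; have d0 : 0 < d by rewrite subr_gt0.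
  have QL := left_of Q.
  have -> : derive1 g z = lim ((fun h => h^-1 * (g (h + z) - g z)) @ at_left (0:R)).
    by apply/esym/cvg_lim.
  have -> : z' - z = - d by rewrite /d opprB.
  rewrite mulrN -opprB lerN2 -ler_pdivlMr //.
  apply: limr_le; first by apply/cvg_ex; eexists; exact QL.
  near=> h.
  have h0 : h < 0 by near: h; exact: nbhs_left_lt.
  have hd : - d < h by near: h; apply: nbhs_left_gt; rewrite oppr_lt0.
  have t01 : 0 <= - h / d <= 1.
    apply/andP; split; first by rewrite divr_ge0 // ltW // oppr_gt0.
    by rewrite ler_pdivrMr // mul1r ltW // ltrNl.
  have := cc z' z (- h / d) hz' hz t01.
  have -> : - h / d * z' + (1 - - h / d) * z = h + z.
    by rewrite /d; field; rewrite subr_eq0 gt_eqF.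
  move=> H.
  have -> : (g z - g z') / d = h^-1 * (- h / d * (g z' - g z)).
    by field; rewrite gt_eqF // lt_eqF.
  apply: ler_wnM2l; first by rewrite invr_le0 ltW.
  lra.
Unshelve. all: by end_near.
Qed.


Lemma poly4 (s : R) : -1 <= s / 4 -> 
  1 + s + s^+2 * (6 - 9/8) / 16 <= (1 + s / 4) ^+ 4 \/ s < - 9 / 8.
Proof.
move=> h.
have [ls|ls] := ltP s (- 9 / 8); first by right.
left.
have e : (1 + s / 4) ^+ 4 = 1 + s + (s/4)^+2 * (6 + 4 * (s/4) + (s/4)^+2).
  by rewrite !exprS expr0; field.
rewrite e.
have : (s/4)^+2 * (6 - 9/8) <= (s/4)^+2 * (6 + 4 * (s/4) + (s/4)^+2).
  apply: ler_wpM2l; first exact: sqr_ge0.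
  have := sqr_ge0 (s/4); rewrite expr2; lra.
have -> : s^+2 * (6 - 9/8) / 16 = (s/4)^+2 * (6 - 9/8) by rewrite !expr2; field.
lra.
Qed.

Lemma exp_ineq (t k : R) : 0 <= k <= 1/4 -> k * `|t| <= 1/8 ->
  1 + t <= expR (t - k * t^+2).
Proof.
move=> /andP[k0 k1] kt.
have [tl|tl] := leP t (-1).
  by apply: le_trans (expR_ge0 _); lra.
set s := t - k * t^+2.
have ktt : k * t^+2 <= `|t| / 8.
  have tt : t^+2 = `|t| * `|t| by rewrite -expr2 real_normK ?num_real.
  by rewrite tt mulrA; have := normr_ge0 t; nra.
have es : expR s = expR (s / 4) ^+ 4.
  by rewrite -expRM_natl; congr expR; field.
rewrite es.
have t0 : 0 <= `|t| by [].
have [tp|tn] := leP 0 t.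
- have aT : `|t| = t by rewrite ger0_norm.
  have ss : 7 * t / 8 <= s by rewrite /s; lra.
  have s0 : 0 <= s / 4 by lra.
  have le1 : (1 + s / 4) ^+ 4 <= expR (s / 4) ^+ 4.
    apply: lerXn2r; rewrite ?nnegrE ?expR_ge0 //; [lra | exact: expR_ge1Dx].
  apply: le_trans le1.
  have e : (1 + s / 4) ^+ 4 = 1 + s + (s/4)^+2 * (6 + 4 * (s/4) + (s/4)^+2).
    by rewrite !exprS expr0; field.
  rewrite e.
  have h1 : (s/4)^+2 * 6 <= (s/4)^+2 * (6 + 4 * (s/4) + (s/4)^+2).
    apply: ler_wpM2l; first exact: sqr_ge0.
    have := sqr_ge0 (s/4); lra.
  have h2 : (7 * t / 8) ^+ 2 <= s ^+ 2.
    by rewrite lerXn2r ?nnegrE //; lra.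
  have h3 : k * t^+2 <= 1/4 * t^+2 by apply: ler_wpM2r => //; exact: sqr_ge0.
  rewrite /s in h1 h2 *.
  move: h1 h2 h3; rewrite !expr2 => h1 h2 h3.
  nra.
- have aT : `|t| = - t by rewrite ltr0_norm.
  have ss : s <= t by rewrite /s; have := sqr_ge0 t; nra.
  have ss2 : 9 * t / 8 <= s by rewrite /s; lra.
  have s0 : 0 <= 1 + s / 4 by lra.
  have le1 : (1 + s / 4) ^+ 4 <= expR (s / 4) ^+ 4.
    apply: lerXn2r; rewrite ?nnegrE ?expR_ge0 //; exact: expR_ge1Dx.
  apply: le_trans le1.
  have e : (1 + s / 4) ^+ 4 = 1 + s + (s/4)^+2 * (6 + 4 * (s/4) + (s/4)^+2).
    by rewrite !exprS expr0; field.
  rewrite e.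
  have h1 : (s/4)^+2 * 4 <= (s/4)^+2 * (6 + 4 * (s/4) + (s/4)^+2).
    apply: ler_wpM2l; first exact: sqr_ge0.
    have := sqr_ge0 (s/4); lra.
  have h2 : t ^+ 2 <= s ^+ 2.
    rewrite -sqrrN -[s^+2]sqrrN lerXn2r ?nnegrE //; lra.
  have h3 : k * t^+2 <= 1/4 * t^+2 by apply: ler_wpM2r => //; exact: sqr_ge0.
  rewrite /s in h1 h2 *.
  move: h1 h2 h3; rewrite !expr2 => h1 h2 h3.
  nra.
Qed.


Lemma key (l : R -> R) (alpha G r z z' : R) : 0 < alpha -> 0 < G -> 0 < r ->
  (forall z, derivable l z 1) -> exp_concave_on alpha r l ->
  (forall z, `|derive1 l z| <= G) -> `|z| <= r -> `|z'| <= r ->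
  l z - l z' <= derive1 l z * (z - z')
     - (2^-1 * Num.min alpha (4 * G * r)^-1) / 2 * (derive1 l z * (z - z'))^+2.
Proof.
move=> a0 G0 r0 dl hec lG hz hz'.
set g := fun z => expR (- alpha * l z).
have cc : forall a b t, `|a| <= r -> `|b| <= r -> 0 <= t <= 1 ->
     t * g a + (1 - t) * g b <= g (t * a + (1 - t) * b).
  by move=> a b t ha hb ht; exact: hec.
have dm : forall z, derivable (fun z => - alpha * l z) z 1.
  move=> y.
  have -> : (fun z => - alpha * l z) = (cst (- alpha)) * l by apply: funext.
  exact: derivableM (derivable_cst _ _ _) (dl y).
have dg : derivable g z 1.
  apply/derivable1_diffP.
  have -> : g = expR \o (fun z => - alpha * l z) by [].
  apply: differentiable_comp; first exact/derivable1_diffP.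
  exact/derivable1_diffP/derivable_expR.
have := tangent cc hz hz' dg.
have -> : derive1 g z = expR (- alpha * l z) * (- alpha * derive1 l z).
  have -> : g = expR \o (fun z => - alpha * l z) by [].
  rewrite derive1_comp; [|exact: dm|exact: derivable_expR].
  rewrite derive1Ml //; congr (_ * _); rewrite derive1E; exact: derive_val.
rewrite /g.
set u := derive1 l z.
set D := l z' - l z.
set E := expR (- alpha * l z).
have E0 : 0 < E by exact: expR_gt0.
have -> : expR (- alpha * l z') = E * expR (- alpha * D).
  by rewrite /E -expRD; congr expR; rewrite /D; ring.
move=> H.
set h := z - z'.
set t := alpha * u * h.
have H2 : expR (- alpha * D) <= 1 + t.
  have : E * expR (- alpha * D) <= E * (1 + t).
    by rewrite /t /h; move: H; rewrite -/E; nra.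
  by rewrite ler_pM2l.
set m := Num.min alpha (4 * G * r)^-1.
set b := 2^-1 * m.
have m0 : 0 < m by rewrite lt_min a0 invr_gt0 !mulr_gt0.
have m1 : m <= alpha by rewrite ge_min lexx.
have m2 : m <= (4 * G * r)^-1 by rewrite ge_min lexx orbT.
have b0 : 0 < b by rewrite /b mulr_gt0 // invr_gt0.
have m2' : m * (4 * G * r) <= 1 by rewrite -ler_pdivlMr ?div1r // !mulr_gt0.
set k := b / (2 * alpha).
have k0 : 0 <= k by rewrite /k divr_ge0 // ltW // mulr_gt0.
have k1 : k <= 1/4.
  by rewrite /k ler_pdivrMr ?mulr_gt0 // /b; lra.
have uG : `|u| <= G by exact: lG.
have hr : `|h| <= 2 * r.
  by rewrite /h (le_trans (ler_normB _ _)) //; lra.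
have kt : k * `|t| <= 1/8.
  have -> : k * `|t| = b / 2 * (`|u| * `|h|).
    rewrite /t !normrM (gtr0_norm a0) /k; field; rewrite gt_eqF //.
  have uh : `|u| * `|h| <= G * (2 * r).
    by apply: ler_pM => //; exact: normr_ge0.
  have : b / 2 * (`|u| * `|h|) <= b / 2 * (G * (2 * r)).
    by apply: ler_wpM2l => //; rewrite divr_ge0 // ltW.
  move=> H3; apply: (le_trans H3); rewrite /b; nra.
have := exp_ineq (introT andP (conj k0 k1)) kt.
move=> H4.
have H5 : - alpha * D <= t - k * t^+2 by rewrite -ler_expR (le_trans H2).
have e : t - k * t^+2 = alpha * (u * h - b / 2 * (u * h)^+2).
  by rewrite /t /k; field; rewrite gt_eqF.
rewrite e in H5.
have : alpha * (l z - l z') <= alpha * (u * h - b / 2 * (u * h) ^+ 2).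
  by apply: le_trans H5; rewrite /D; lra.
by rewrite ler_pM2l.
Qed.


Lemma l_cont (l : R -> R) : (forall z, derivable l z 1) -> continuous l.
Proof.
move=> dl z; apply: differentiable_continuous; exact/derivable1_diffP.
Qed.

Lemma derive_meas (l : R -> R) : (forall z, derivable l z 1) ->
  measurable_fun setT (derive1 l).
Proof.
move=> dl.
apply: (@measurable_realfun.measurable_fun_cvg _ _ _ setT
   (fun m (z : R) => (harmonic m : R)^-1 * (l (harmonic m + z) - l z)) (derive1 l)).
  move=> m; apply: measurable_realfun.continuous_measurable_fun => z.
  apply: cvgM; first exact: cvg_cst.
  apply: cvgB; last exact: l_cont.
  apply: continuous_comp; last exact: l_cont.
  apply: cvgD; [exact: cvg_cst | exact: cvg_id].
move=> z _.
have := right_of (quot_cvg (dl z)).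
move/cvg_at_rightP => /(_ harmonic); apply; split.
  by move=> n; exact: harmonic_gt0.
exact: cvg_harmonic.
Qed.

End A.

Section B.
Context (R : realType) (dT : measure_display) (T : measurableType dT)
  (P : probability T R).

Definition BM (f : T -> R) := measurable_fun setT f /\ exists M, forall t, `|f t| <= M.

Lemma BM_int f : BM f -> P.-integrable setT (EFin \o f).
Proof.
move=> [mf [M hM]].
apply: measurable_bounded_integrable => //.
  by apply: (le_lt_trans (probability_le1 P measurableT)); exact: ltry.
exists M; split; first by rewrite num_real.
move=> N hN t _; apply: le_trans (hM t) _; exact: ltW.
Qed.

Lemma BM_cst c : BM (fun _ => c).
Proof. by split; [exact: measurable_cst | exists `|c|]. Qed.

Lemma BM_add f g : BM f -> BM g -> BM (fun t => f t + g t).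
Proof.
move=> [mf [M hM]] [mg [N hN]]; split; first exact: measurable_realfun.measurable_funD.
exists (M + N) => t; apply: le_trans (ler_normD _ _) _; exact: lerD.
Qed.

Lemma BM_mul f g : BM f -> BM g -> BM (fun t => f t * g t).
Proof.
move=> [mf [M hM]] [mg [N hN]]; split; first exact: measurable_realfun.measurable_funM.
exists (M * N) => t; rewrite normrM; apply: ler_pM => //; exact: normr_ge0.
Qed.

Lemma BM_opp f : BM f -> BM (fun t => - f t).
Proof.
move=> hf; have := BM_mul (BM_cst (-1)) hf.
by congr BM; apply: funext => t; rewrite mulN1r.
Qed.

Lemma BM_sum (I : Type) (s : seq I) (F : I -> T -> R) :
  (forall i, BM (F i)) -> BM (fun t => \sum_(i <- s) F i t).
Proof.
move=> hF; elim: s => [|a s IH].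
  have := BM_cst 0; congr BM; apply: funext => t; by rewrite big_nil.
have := BM_add (hF a) IH; congr BM; apply: funext => t; by rewrite big_cons.
Qed.

Lemma Rint_add f g : BM f -> BM g ->
  \int[P]_t (f t + g t) = \int[P]_t f t + \int[P]_t g t.
Proof. by move=> hf hg; apply: RintegralD => //; exact: BM_int. Qed.

Lemma Rint_sub f g : BM f -> BM g ->
  \int[P]_t (f t - g t) = \int[P]_t f t - \int[P]_t g t.
Proof. by move=> hf hg; apply: RintegralB => //; exact: BM_int. Qed.

Lemma Rint_scale c f : BM f -> \int[P]_t (c * f t) = c * \int[P]_t f t.
Proof. by move=> hf; apply: RintegralZl => //; exact: BM_int. Qed.

Lemma Rint_le f g : BM f -> BM g -> (forall t, f t <= g t) ->
  \int[P]_t f t <= \int[P]_t g t.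
Proof. by move=> hf hg fg; apply: le_Rintegral => //; exact: BM_int. Qed.

Lemma Rint_sum (I : Type) (s : seq I) (F : I -> T -> R) :
  (forall i, BM (F i)) ->
  \int[P]_t (\sum_(i <- s) F i t) = \sum_(i <- s) \int[P]_t F i t.
Proof.
move=> hF; elim: s => [|a s IH].
  rewrite big_nil; under eq_Rintegral do rewrite big_nil.
  by rewrite Rintegral_cst // mul0r.
rewrite big_cons; under eq_Rintegral do rewrite big_cons.
by rewrite Rint_add ?IH //; exact: BM_sum.
Qed.

Lemma Rint_cst c : \int[P]_t c = c.
Proof.
rewrite Rintegral_cst // (_ : fine (P setT) = 1) ?mulr1 //.
exact: (congr1 fine (probability_setT P)).
Qed.

End B.

Section C.
Context (R : realType) (d : nat).
Implicit Types (u v : 'cV[R]_d).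

Lemma dotvB u v z : dotv (u - v) z = dotv u z - dotv v z.
Proof.
by rewrite /dotv -sumrB; apply: eq_bigr => k _; rewrite !mxE mulrBl.
Qed.

Lemma dotvN u z : dotv (- u) z = - dotv u z.
Proof.
by rewrite /dotv -sumrN; apply: eq_bigr => k _; rewrite !mxE mulNr.
Qed.

Lemma dotvC u v : dotv u v = dotv v u.
Proof. by apply: eq_bigr => k _; rewrite mulrC. Qed.

Lemma dotv_ge0 u : 0 <= dotv u u.
Proof. by apply: sumr_ge0 => k _; rewrite -expr2 sqr_ge0. Qed.

Lemma coord_sq u k : u k 0 ^+ 2 <= dotv u u.
Proof.
rewrite /dotv (bigD1 k) //= expr2 lerDl.
by apply: sumr_ge0 => j _; rewrite -expr2 sqr_ge0.
Qed.

Lemma enorm_sq u r : enorm u <= r -> dotv u u <= r ^+ 2.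
Proof.
move=> h; rewrite -(sqr_sqrtr (dotv_ge0 u)).
apply: lerXn2r => //; rewrite ?nnegrE ?sqrtr_ge0 //.
by apply: le_trans h; exact: sqrtr_ge0.
Qed.

Lemma dot_le u v r (e : R) : 0 < r -> e ^+ 2 = 1 ->
  dotv u u <= r ^+ 2 -> dotv v v <= 1 -> e * dotv u v <= r.
Proof.
move=> r0 e2 hu hv.
have H : 2 * r * (e * dotv u v) <= dotv u u + r ^+ 2 * dotv v v.
  rewrite /dotv !mulr_sumr -big_split /=.
  apply: ler_sum => k _.
  have := sqr_ge0 (u k 0 - r * e * v k 0).
  rewrite !expr2; nra.
have : 2 * r * (e * dotv u v) <= 2 * r * r.
  apply: le_trans H _.
  have : r ^+ 2 * dotv v v <= r ^+ 2 * 1.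
    by apply: ler_wpM2l => //; exact: sqr_ge0.
  rewrite mulr1 expr2 in hu * => h1; lra.
by rewrite ler_pM2l ?mulr_gt0.
Qed.

Lemma dot_bound u v r : 0 < r ->
  dotv u u <= r ^+ 2 -> dotv v v <= 1 -> `|dotv u v| <= r.
Proof.
move=> r0 hu hv; rewrite ler_norml; apply/andP; split.
  rewrite lerNl -mulN1r; apply: dot_le => //; by rewrite sqrrN expr1n.
by rewrite -[dotv u v]mul1r; apply: dot_le => //; rewrite expr1n.
Qed.

Lemma coord_bound u k : enorm u <= 1 -> `|u k 0| <= 1.
Proof.
move=> h; have := le_trans (coord_sq u k) (enorm_sq h).
rewrite expr1n -real_normK ?num_real // => h2.
by rewrite -(expr_le1 (n:=2)) // normr_ge0.
Qed.

End C.

Section D.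
Context (R : realType) (dT : measure_display) (T : measurableType dT)
  (P : probability T R) (d : nat) (x : T -> 'cV[R]_d).
Hypothesis mx : forall k : 'I_d, measurable_fun setT (fun t => x t k 0).
Hypothesis bx : forall t, enorm (x t) <= 1.

Lemma BMx k : BM (fun t => x t k 0).
Proof. by split; [exact: mx | exists 1 => t; exact: coord_bound]. Qed.

Lemma BMdot v : BM (fun t => dotv v (x t)).
Proof.
rewrite /dotv; apply: BM_sum => k; apply: BM_mul; [exact: BM_cst | exact: BMx].
Qed.

Lemma qform_int (F : T -> R) (v : 'cV[R]_d) : BM F ->
  qform (\matrix_(i, j) \int[P]_t (F t * (x t i 0 * x t j 0))) v
  = \int[P]_t (F t * (dotv v (x t)) ^+ 2).
Proof.
move=> hF.
have E : forall t, F t * (dotv v (x t)) ^+ 2 =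
   \sum_(i < d) \sum_(j < d) (v i 0 * v j 0) * (F t * (x t i 0 * x t j 0)).
  move=> t; rewrite expr2 {1}/dotv mulr_suml mulr_sumr; apply: eq_bigr => i _.
  rewrite /dotv !mulr_sumr; apply: eq_bigr => j _; ring.
under eq_Rintegral do rewrite E.
rewrite Rint_sum; last first.
  move=> i; apply: BM_sum => j; apply: BM_mul; first exact: BM_cst.
  by apply: BM_mul => //; apply: BM_mul; exact: BMx.
rewrite /qform mxE.
under eq_bigr do rewrite mxE mulr_suml.
rewrite exchange_big /=; apply: eq_bigr => i _.
rewrite Rint_sum; last first.
  move=> j; apply: BM_mul; first exact: BM_cst.
  by apply: BM_mul => //; apply: BM_mul; exact: BMx.
apply: eq_bigr => j _.
rewrite Rint_scale; last by apply: BM_mul => //; apply: BM_mul; exact: BMx.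
rewrite !mxE; ring.
Qed.


Lemma alg (b G c V Y A : R) : 0 < b -> 0 < G -> 0 < c -> `|V| <= G ->
  `|Y| <= 1 -> b * G * `|A| <= 1/4 ->
  V * (Y * A) - b / 2 * (V * (Y * A)) ^+ 2 + b / 2 * (V ^+ 2 * A ^+ 2)
  <= G * (A ^+ 2 / c + c) / 2.
Proof.
move=> b0 G0 c0 hV hY hA.
set p := `|A|; set q := `|Y|.
move: hA hY; rewrite -/p -/q => hA hY.
have p0 : 0 <= p := normr_ge0 _.
have q0 : 0 <= q := normr_ge0 _.
have eA : A ^+ 2 = p ^+ 2 by rewrite real_normK ?num_real.
have eY : Y ^+ 2 = q ^+ 2 by rewrite real_normK ?num_real.
have e : V * (Y * A) - b / 2 * (V * (Y * A)) ^+ 2 + b / 2 * (V ^+ 2 * A ^+ 2)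
   = V * (Y * A) + b / 2 * (V ^+ 2 * p ^+ 2 * (1 - q ^+ 2)).
  by rewrite -eA -eY; ring.
rewrite e.
have s1 : V * (Y * A) <= G * (q * p).
  apply: le_trans (ler_norm _) _; rewrite !normrM.
  by apply: ler_wpM2r => //; exact: mulr_ge0.
have V2 : V ^+ 2 <= G ^+ 2.
  by rewrite -real_normK ?num_real // lerXn2r ?nnegrE ?normr_ge0 // ltW.
have s2 : b / 2 * (V ^+ 2 * p ^+ 2 * (1 - q ^+ 2)) <= b / 2 * (G ^+ 2 * p ^+ 2 * (1 - q ^+ 2)).
  apply: ler_wpM2l; first by rewrite divr_ge0 // ltW.
  apply: ler_wpM2r; first by rewrite subr_ge0 expr_le1.
  by apply: ler_wpM2r => //; exact: sqr_ge0.
have s3 : b / 2 * (G ^+ 2 * p ^+ 2 * (1 - q ^+ 2)) <= G * p * (1 - q).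
  have e3 : b / 2 * (G ^+ 2 * p ^+ 2 * (1 - q ^+ 2)) = (G * p * (1 - q)) * (b * G * p * (1 + q) / 2).
    by ring.
  rewrite e3 -[X in _ <= X]mulr1; apply: ler_wpM2l.
    by apply: mulr_ge0; [apply: mulr_ge0 => //; exact: ltW | lra].
  nra.
have s4 : G * p <= G * (A ^+ 2 / c + c) / 2.
  rewrite eA -mulrA; apply: ler_wpM2l; first exact: ltW.
  have := sqr_ge0 (p - c).
  have -> : (p ^+ 2 / c + c) / 2 = (p ^+ 2 + c ^+ 2) / (2 * c) by field; rewrite gt_eqF.
  move=> h; rewrite ler_pdivlMr ?mulr_gt0 //; move: h; rewrite !expr2; nra.
have : G * (q * p) + G * p * (1 - q) = G * p by ring.
lra.
Qed.

Lemma lip (l : R -> R) (alpha G r z z' : R) : 0 < alpha -> 0 < G -> 0 < r ->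
  (forall z, derivable l z 1) -> exp_concave_on alpha r l ->
  (forall z, `|derive1 l z| <= G) -> `|z| <= r -> `|z'| <= r ->
  l z - l z' <= G * `|z - z'|.
Proof.
move=> a0 G0 r0 dl hec lG hz hz'.
have := key a0 G0 r0 dl hec lG hz hz'.
set b := (X in _ - X * _ ^+ 2).
have b0 : 0 <= b.
  rewrite /b divr_ge0 // mulr_ge0 // ?invr_ge0 // le_min ltW //= invr_ge0 ltW //.
  by rewrite !mulr_gt0.
move=> h; apply: (le_trans h).
have := mulr_ge0 b0 (sqr_ge0 (derive1 l z * (z - z'))).
have : derive1 l z * (z - z') <= G * `|z - z'|.
  apply: le_trans (ler_norm _) _; rewrite normrM.
  by apply: ler_wpM2r => //; exact: normr_ge0.
lra.
Qed.

Lemma per_iter (y : T -> R) (l : R -> R) (Rad alpha G theta c : R)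
    (wstar u : 'cV[R]_d) :
  measurable_fun setT y -> (forall t, -1 <= y t <= 1) ->
  0 < Rad -> 0 < alpha -> 0 < G ->
  (forall z, 0 <= l z) ->
  (forall z, derivable l z 1) -> exp_concave_on alpha Rad l ->
  (forall z, `|derive1 l z| <= G) ->
  enorm wstar <= Rad -> enorm u <= Rad ->
  theta * qform (second_moment P x) (u - wstar)
    <= qform (weighted_moment P l x y u) (u - wstar) ->
  0 < c ->
  risk P l x y u - risk P l x y wstar
  + theta * (2^-1 * Num.min alpha (4 * G * Rad)^-1) / 2
      * qform (second_moment P x) (u - wstar)
  <= G * (qform (second_moment P x) (u - wstar) / c + c) / 2.
Proof.
move=> my hy R0 a0 G0 l0 dl hec lG hws hu hth c0.
set b := 2^-1 * Num.min alpha (4 * G * Rad)^-1.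
have b0 : 0 < b.
  by rewrite /b mulr_gt0 ?invr_gt0 // lt_min a0 invr_gt0 !mulr_gt0.
have bG : b * G * Rad <= 1/8.
  have m2 : Num.min alpha (4 * G * Rad)^-1 <= (4 * G * Rad)^-1.
    by rewrite ge_min lexx orbT.
  have : Num.min alpha (4 * G * Rad)^-1 * (4 * G * Rad) <= 1.
    by rewrite -ler_pdivlMr ?div1r // !mulr_gt0.
  by rewrite /b; nra.
have xx t : dotv (x t) (x t) <= 1 by have := enorm_sq (bx t); rewrite expr1n.
have dB (v : 'cV[R]_d) t : enorm v <= Rad -> `|dotv v (x t)| <= Rad.
  by move=> hv; apply: dot_bound => //; exact: enorm_sq.
have zB (v : 'cV[R]_d) t : enorm v <= Rad -> `|y t * dotv v (x t)| <= Rad.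
  move=> hv; rewrite normrM -[Rad]mul1r; apply: ler_pM => //; last exact: dB.
  by rewrite ler_norml; case/andP: (hy t) => -> ->.
have lB (w0 : 'cV[R]_d) : enorm w0 <= Rad -> BM (fun t => l (y t * dotv w0 (x t))).
  move=> hw0; split.
    apply: measurableT_comp; first exact: (measurable_realfun.continuous_measurable_fun (l_cont dl)).
    apply: measurable_realfun.measurable_funM => //; exact: (BMdot _).1.
  exists (l 0 + G * Rad) => t.
  rewrite ger0_norm //.
  have := lip a0 G0 R0 dl hec lG (zB w0 t hw0) (_ : `|0| <= Rad).
  rewrite normr0 subr0 => /(_ (ltW R0)) h.
  have := zB w0 t hw0; have := ltW G0; nra.
set U := fun t => derive1 l (y t * dotv u (x t)).
set a := fun t => dotv (u - wstar) (x t).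
have BU : BM U.
  split; last by exists G => t; exact: lG.
  apply: measurableT_comp; first exact: derive_meas.
  apply: measurable_realfun.measurable_funM => //; exact: (BMdot _).1.
have Ba : BM a by exact: BMdot.
have aB t : b * G * `|a t| <= 1/4.
  have : `|a t| <= 2 * Rad.
    rewrite /a dotvB; apply: le_trans (ler_normB _ _) _.
    have := dB u t hu; have := dB wstar t hws; lra.
  have := mulr_gt0 b0 G0; nra.
have pt t : l (y t * dotv u (x t)) - l (y t * dotv wstar (x t))
    + b / 2 * (U t ^+ 2 * a t ^+ 2) <= G * (a t ^+ 2 / c + c) / 2.
  have := key a0 G0 R0 dl hec lG (zB u t hu) (zB wstar t hws).
  rewrite -/b.
  have -> : y t * dotv u (x t) - y t * dotv wstar (x t) = y t * a t.
    by rewrite /a dotvB; ring.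
  move=> h.
  have hy1 : `|y t| <= 1 by rewrite ler_norml; case/andP: (hy t) => -> ->.
  have := alg b0 G0 c0 (lG (y t * dotv u (x t))) hy1 (aB t).
  rewrite /U /= => h2; lra.
have BL : BM (fun t => l (y t * dotv u (x t)) - l (y t * dotv wstar (x t))).
  by apply: BM_add; [exact: lB | apply: BM_opp; exact: lB].
have BUa : BM (fun t => U t ^+ 2 * a t ^+ 2).
  by apply: BM_mul; apply: BM_mul.
have BR : BM (fun t => a t ^+ 2).
  by apply: BM_mul.
have I : \int[P]_t (l (y t * dotv u (x t)) - l (y t * dotv wstar (x t))
    + b / 2 * (U t ^+ 2 * a t ^+ 2)) <= \int[P]_t (G * (a t ^+ 2 / c + c) / 2).
  apply: Rint_le pt.
    by apply: BM_add => //; apply: BM_mul => //; exact: BM_cst.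
  apply: BM_mul; last exact: BM_cst.
  apply: BM_mul; first exact: BM_cst.
  apply: BM_add; last exact: BM_cst.
  apply: BM_mul; [exact: BR | exact: BM_cst].
rewrite Rint_add // in I; last by apply: BM_mul => //; exact: BM_cst.
rewrite Rint_sub ?Rint_scale // in I; try exact: lB.
have eR : \int[P]_t (G * (a t ^+ 2 / c + c) / 2)
    = G / (2 * c) * \int[P]_t (a t ^+ 2) + G * c / 2.
  rewrite -Rint_scale // -[G * c / 2](Rint_cst P) -Rint_add //; last exact: BM_cst.
    by apply: eq_Rintegral => t _; field; rewrite gt_eqF.
  by apply: BM_mul => //; exact: BM_cst.
rewrite eR in I.
have eW : qform (weighted_moment P l x y u) (u - wstar)
    = \int[P]_t (U t ^+ 2 * a t ^+ 2) := qform_int _ (BM_mul BU BU).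
have eH : qform (second_moment P x) (u - wstar) = \int[P]_t (a t ^+ 2).
  have -> : second_moment P x = \matrix_(i, j) \int[P]_t (1 * (x t i 0 * x t j 0)).
    by apply/matrixP => i j; rewrite !mxE; apply: eq_Rintegral => t _; rewrite mul1r.
  rewrite qform_int; last exact: BM_cst.
  by apply: eq_Rintegral => t _; rewrite mul1r.
rewrite -eW -eH in I.
change (\int[P]_t l (y t * dotv u (x t))) with (risk P l x y u) in I.
change (\int[P]_t l (y t * dotv wstar (x t))) with (risk P l x y wstar) in I.
have h2 : b / 2 * (theta * qform (second_moment P x) (u - wstar))
   <= b / 2 * qform (weighted_moment P l x y u) (u - wstar).
  by apply: ler_wpM2l => //; rewrite divr_ge0 // ltW.
have -> : theta * b / 2 * qform (second_moment P x) (u - wstar)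
   = b / 2 * (theta * qform (second_moment P x) (u - wstar)) by ring.
have -> : G * (qform (second_moment P x) (u - wstar) / c + c) / 2
   = G / (2 * c) * qform (second_moment P x) (u - wstar) + G * c / 2.
  by field; rewrite gt_eqF.
lra.
Qed.


End D.

Local Close Scope classical_set_scope.

Theorem lemma8 (R : realType) (dT : measure_display) (T : measurableType dT)
  (P : probability T R) (d : nat) (x : T -> 'cV[R]_d) (y : T -> R)
  (n : nat) (s : nat -> T)
  (Rad alpha G theta eta1 a : R) (l : R -> R)
  (wstar : 'cV[R]_d) (w : nat -> 'cV[R]_d) :
  (* the distribution P on X x Y *)
  (forall k : 'I_d, measurable_fun setT (fun t => x t k 0)) ->
  measurable_fun setT y ->
  (forall t, enorm (x t) <= 1) ->
  (forall t, -1 <= y t <= 1) ->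
  (0 < n)%N ->
  (* loss *)
  0 < Rad -> 0 < alpha -> 0 < G ->
  (forall z, 0 <= l z) ->
  (forall z, derivable l z 1) ->
  convex_on_R l ->
  exp_concave_on alpha Rad l ->
  (forall z, `| derive1 l z | <= G) ->
  (* w_* minimizes L over W = {w : ||w|| <= R} *)
  enorm wstar <= Rad ->
  (forall u, enorm u <= Rad -> risk P l x y wstar <= risk P l x y u) ->
  (* Assumption (II) with constant theta > 0 *)
  0 < theta ->
  (forall u, enorm u <= Rad -> forall v : 'cV[R]_d,
     theta * qform (second_moment P x) v <= qform (weighted_moment P l x y u) v) ->
  (* the algorithm *)
  0 < eta1 -> 0 < a ->
  w 1%N = 0 ->
  (forall i : nat, (1 <= i < n)%N ->
     enorm (w i.+1) <= Rad /\
     forall u, enorm u <= Rad ->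
       step_obj l x y s eta1 a (w i) i (w i.+1)
         <= step_obj l x y s eta1 a (w i) i u) ->
  (* A <= 4 R^2 / n *)
  \sum_(1 <= i < n.+1) qform (second_moment P x) (w i - wstar)
     <= 4 * Rad ^+ 2 / n%:R ->
  \sum_(1 <= i < n.+1) (risk P l x y (w i) - risk P l x y wstar)
   + theta * (2^-1 * Num.min alpha (4 * G * Rad)^-1) / 2
       * \sum_(1 <= i < n.+1) qform (second_moment P x) (w i - wstar)
   <= 2 * Rad * G.
Proof.
move=> mx my bx hy n0 R0 a0 G0 l0 dl cvx hec lG hws hmin th0 hII e0 aa0 w1 halg hA.
have nR : (0 : R) < n%:R by rewrite ltr0n.
set c := 2 * Rad / n%:R.
have c0 : 0 < c by rewrite /c divr_gt0 // mulr_gt0.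
have wB : forall i, (1 <= i < n.+1)%N -> enorm (w i) <= Rad.
  move=> [|[|j]] // /andP[_ hj].
    rewrite w1 /enorm /dotv big1 ?sqrtr0 ?ltW // => k _.
    by rewrite mxE mul0r.
  by case: (halg j.+1 _); rewrite // hj.
have step : forall i, (1 <= i < n.+1)%N ->
   risk P l x y (w i) - risk P l x y wstar
   + theta * (2^-1 * Num.min alpha (4 * G * Rad)^-1) / 2
      * qform (second_moment P x) (w i - wstar)
   <= G / (2 * c) * qform (second_moment P x) (w i - wstar) + G * c / 2.
  move=> i hi.
  have := per_iter mx bx my hy R0 a0 G0 l0 dl hec lG hws (wB i hi)
    (hII _ (wB i hi) _) c0.
  move=> h; apply: (le_trans h); rewrite le_eqVlt; apply/orP; left; apply/eqP.
  by field; rewrite gt_eqF.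
rewrite mulr_sumr -big_split /=.
apply: le_trans (ler_sum_nat step) _.
rewrite big_split /= -mulr_sumr sumr_const_nat subn1 /= -mulr_natr.
have h1 : G / (2 * c) * \sum_(1 <= i < n.+1) qform (second_moment P x) (w i - wstar)
   <= G / (2 * c) * (4 * Rad ^+ 2 / n%:R).
  by apply: ler_wpM2l => //; rewrite divr_ge0 // ?mulr_ge0 // ltW.
have e1 : G / (2 * c) * (4 * Rad ^+ 2 / n%:R) = Rad * G.
  by rewrite /c; field; rewrite !gt_eqF.
have e2 : G * c / 2 * n%:R = Rad * G.
  by rewrite /c; field; rewrite !gt_eqF.
lra.
Qed.
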